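(* Let $k\ge 1$ and $s\ge 2$ be integers, let $a_s>a_{s-1}>\dots>a_1\ge 1$ be integers, and let $m_1,\dots,m_s\ge 1$ be integers with $m_1+\dots+m_s=k$ and $m_s=2h+1$ for some integer $h\ge 0$. Let $b$ be the multiset consisting of $m_i$ copies of $a_i$ for $i=1,\dots,s$. Suppose $a_s>\sum_{i=1}^{s-1}m_ia_i$. Consider the quadratic form $$q(x)=\frac{1}{2}\sum_{i=1}^k\sum_{j=1}^k|i-j|\,x_ix_j$$ over all vectors $x=(x_1,\dots,x_k)$ whose entries are a rearrangement of the multiset $b$. Then, up to reversal of the order of entries (which leaves $q$ unchanged), $q$ is uniquely maximized by $$x=(\underbrace{a_s,\dots,a_s}_{h+1},\underbrace{a_1,\dots,a_1}_{m_1},\underbrace{a_2,\dots,a_2}_{m_2},\dots,\underbrace{a_{s-1},\dots,a_{s-1}}_{m_{s-1}},\underbrace{a_s,\dots,a_s}_{h}),$$ i.e. $h+1$ copies of $a_s$, followed by all remaining entries of $b$ other than $a_s$ in nondecreasing order, followed by $h$ copies of $a_s$.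
   Context: Motivation: for a caterpillar tree $T$ of order $n$ whose non-leaf vertices $v_1,\dots,v_k$ lie in this order along the spine, the Wiener index (sum of distances over all unordered vertex pairs) equals $W(T)=(n-1)^2+q(x)$ with $x_i=\deg(v_i)-1$; the multiset $b$ plays the role of the decremented degree sequence (non-leaf degrees minus one). *)

(* Defs.v *)
From mathcomp Require Import all_boot.
Set Implicit Arguments. Unset Strict Implicit. Unset Printing Implicit Defensive.

Definition distn (i j : nat) : nat := (i - j) + (j - i).

(* q(x) = 1/2 * sum_i sum_j |i-j| x_i x_j  (the double sum is even, so the
   nat division by 2 is exact). Indices are 0-based; |i-j| is shift invariant. *)
Definition qform (x : seq nat) : nat :=
  (\sum_(i < size x) \sum_(j < size x) distn i j * nth 0 x i * nth 0 x j) %/ 2.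

(* the multiset b: m_i copies of a_i, i = 1..s, as a sequence (up to perm_eq) *)
Definition bmultiset (s : nat) (a m : nat -> nat) : seq nat :=
  flatten [seq nseq (m i) (a i) | i <- iota 1 s].

Definition xstar (s h : nat) (a m : nat -> nat) : seq nat :=
  nseq h.+1 (a s) ++ flatten [seq nseq (m i) (a i) | i <- iota 1 s.-1]
    ++ nseq h (a s).

(* Main.v *)
Require Import Defs.
From mathcomp Require Import all_boot zify.
From Stdlib Require Import Classical.
Set Implicit Arguments. Unset Strict Implicit. Unset Printing Implicit Defensive.

Fixpoint Mw (x : seq nat) : nat := if x is y :: x' then y + Mw x' + sumn x' else 0.
Fixpoint Gq (x : seq nat) : nat := if x is y :: x' then Gq x' + y * Mw x' else 0.
Fixpoint Nw (x : seq nat) : nat := if x is y :: x' then y * (size x').+1 + Nw x' else 0.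

Definition Dq (x : seq nat) : nat :=
  \sum_(i < size x) \sum_(j < size x) distn i j * nth 0 x i * nth 0 x j.

Lemma sumn_ord x : sumn x = \sum_(j < size x) nth 0 x j.
Proof.
elim: x => [|y x IH] /=; first by rewrite big_ord0.
by rewrite big_ord_recl /= IH.
Qed.

Lemma Mw_ord x : Mw x = \sum_(j < size x) j.+1 * nth 0 x j.
Proof.
elim: x => [|y x IH] /=; first by rewrite big_ord0.
rewrite big_ord_recl /= IH sumn_ord mul1n -addnA -big_split /=.
congr (_ + _); apply: eq_bigr => i _; rewrite /bump /= add0n; lia.
Qed.

Lemma dsum_recl n (F : nat -> nat -> nat) :
  \sum_(i < n.+1) \sum_(j < n.+1) F i j =
  F 0 0 + \sum_(j < n) F 0 j.+1 + \sum_(i < n) F i.+1 0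
  + \sum_(i < n) \sum_(j < n) F i.+1 j.+1.
Proof.
rewrite big_ord_recl big_ord_recl /= -!addnA; congr (_ + (_ + _)).
rewrite -big_split /=; apply: eq_bigr => i _; by rewrite big_ord_recl.
Qed.

Lemma Dq_cons y x : Dq (y :: x) = Dq x + 2 * (y * Mw x).
Proof.
rewrite /Dq /= (dsum_recl _ (fun i j => distn i j * nth 0 (y :: x) i * nth 0 (y :: x) j)) /=.
rewrite Mw_ord big_distrr /=.
have E1 : \sum_(j < size x) distn 0 j.+1 * y * nth 0 x j
   = \sum_(i < size x) y * (i.+1 * nth 0 x i).
  apply: eq_bigr => i _; rewrite /distn; lia.
have E2 : \sum_(j < size x) distn j.+1 0 * nth 0 x j * y
   = \sum_(i < size x) y * (i.+1 * nth 0 x i).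
  apply: eq_bigr => i _; rewrite /distn; lia.
have E3 : \sum_(i < size x) \sum_(j < size x)
   distn i.+1 j.+1 * nth 0 x i * nth 0 x j
   = \sum_(i < size x) \sum_(j < size x) distn i j * nth 0 x i * nth 0 x j.
  apply: eq_bigr => i _; apply: eq_bigr => j _; rewrite /distn !subSS //.
rewrite E1 E2 E3 /distn; move: (\sum_(i < size x) y * _) (\sum_(i < size x) \sum_(j < size x) _) => P Q; lia.
Qed.

Lemma Dq_Gq x : Dq x = 2 * Gq x.
Proof. elim: x => [|y x IH]; first by rewrite /Dq big_ord0. rewrite Dq_cons IH /=; lia. Qed.

Lemma qform_Gq x : qform x = Gq x.
Proof. rewrite /qform -/(Dq x) Dq_Gq mulKn //. Qed.

Lemma Mw_rcons x y : Mw (rcons x y) = Mw x + y * (size x).+1.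
Proof. elim: x => [|z x IH] /=; first lia. rewrite IH -cats1 sumn_cat /=; lia. Qed.

Lemma Gq_rcons x y : Gq (rcons x y) = Gq x + y * Nw x.
Proof. elim: x => [|z x IH] /=; first lia. rewrite IH Mw_rcons; lia. Qed.

Lemma Nw_rcons x y : Nw (rcons x y) = Nw x + sumn x + y.
Proof. elim: x => [|z x IH] /=; first lia. rewrite IH size_rcons; lia. Qed.

Lemma Nw_rev x : Nw (rev x) = Mw x.
Proof. elim: x => [|z x IH] //=. rewrite rev_cons Nw_rcons IH sumn_rev; lia. Qed.

Lemma Gq_rev x : Gq (rev x) = Gq x.
Proof. elim: x => [|z x IH] //=. rewrite rev_cons Gq_rcons IH Nw_rev; lia. Qed.

Lemma Mw_swap pre u v suf :
  Mw (pre ++ v :: u :: suf) + v = Mw (pre ++ u :: v :: suf) + u.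
Proof. elim: pre => [|y pre IH] /=; first lia. rewrite !sumn_cat /=; lia. Qed.

Lemma Gq_swap pre u v suf :
  Gq (pre ++ v :: u :: suf) + v * sumn pre + u * sumn suf =
  Gq (pre ++ u :: v :: suf) + u * sumn pre + v * sumn suf.
Proof.
elim: pre => [|y pre IH] /=; first lia.
have := Mw_swap pre u v suf => /(congr1 (muln y)); rewrite !mulnDr => H.
lia.
Qed.

Lemma Mw_bound x : Mw x <= size x * sumn x.
Proof. elim: x => [|y x IH] //=. nia. Qed.

Lemma Gq_bound x : Gq x <= size x * (sumn x * sumn x).
Proof. elim: x => [|y x IH] //=. have := Mw_bound x. nia. Qed.

Definition NI (x : seq nat) := forall pre u v suf, x = pre ++ u :: v :: suf ->
  u * sumn pre + v * sumn suf <= v * sumn pre + u * sumn suf.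

Lemma NI_rev x : NI x -> NI (rev x).
Proof.
move=> H pre u v suf E.
have Ex : x = rev suf ++ v :: u :: rev pre.
  by rewrite -[x]revK E rev_cat !rev_cons -!cats1 -!catA.
have := H _ _ _ _ Ex; rewrite !sumn_rev; lia.
Qed.

Lemma NI_inner A x : NI (A :: rcons x A) -> NI x.
Proof.
move=> H pre u v suf E.
have Ex : A :: rcons x A = (A :: pre) ++ u :: v :: rcons suf A.
  by rewrite E rcons_cat.
have := H _ _ _ _ Ex; rewrite /= -cats1 sumn_cat /= !mulnDr; lia.
Qed.

Lemma first_occ (A : nat) x : A \in x -> exists y z, x = y ++ A :: z /\ A \notin y.
Proof.
elim: x => [|w x IH] //; rewrite in_cons; case: eqP => [->|ne] /= H.
  by exists [::], x.
have [y [z [E N]]] := IH H; exists (w :: y), z; split; first by rewrite E.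
by rewrite in_cons negb_or N andbT; apply/eqP=> E'; apply: ne.
Qed.

Lemma sumn_count (A : nat) (z : seq nat) : count_mem A z * A <= sumn z.
Proof.
elim: z => [|w z IH] //=; case: eqP => [->|_] /=; rewrite mulnDl.
  by rewrite mul1n leq_add2l.
by rewrite mul0n add0n; exact: leq_trans IH (leq_addl _ _).
Qed.

Lemma sorted_adj (z : seq nat) :
  (forall p u v s, z = p ++ u :: v :: s -> u <= v) -> sorted leq z.
Proof.
elim: z => [|u z IH] // H; case: z IH H => [|v s] IH H //=.
apply/andP; split; first exact: (H [::] u v s).
apply: IH => p u' v' s' E; apply: (H (u :: p)); by rewrite E.
Qed.

Section Char.
Variables (A : nat) (F : seq nat).
Hypothesis HF : all (fun z => 0 < z < A) F.
Hypothesis HS : sumn F < A.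
Hypothesis Hsort : sorted leq F.

Definition bs h := F ++ nseq h.*2.+1 A.
Definition xs h := nseq h.+1 A ++ F ++ nseq h A.

Lemma AnotF : A \notin F.
Proof. apply/negP => /(allP HF) /=; lia. Qed.

Lemma count_bs x h : perm_eq x (bs h) -> count_mem A x = h.*2.+1.
Proof.
move/permP=> ->; rewrite count_cat count_nseq /= eqxx.
by move/count_memPn: AnotF => ->; rewrite mul1n.
Qed.

Lemma mem_bs x h z : perm_eq x (bs h) -> z \in x -> z != A -> 0 < z < A.
Proof.
move=> P; rewrite (perm_mem P) mem_cat => /orP [/(allP HF) //|].
by move/nseqP => [-> _]; rewrite eqxx.
Qed.

Lemma sum_prefix y w h : perm_eq (y ++ w) (bs h) -> A \notin y -> sumn y <= sumn F.
Proof.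
move=> P N.
have := perm_filter (predC1 A) P; rewrite !filter_cat filter_nseq /= eqxx /= cats0.
have -> : [seq z <- F | z != A] = F.
  apply/all_filterP/allP => z zF; apply/eqP => E; move: AnotF; by rewrite -E zF.
have -> : [seq z <- y | z != A] = y.
  apply/all_filterP/allP => z zy; apply/eqP => E; move: N; by rewrite -E zy.
move/perm_sumn; rewrite sumn_cat; lia.
Qed.

Lemma head_A h x : 0 < h -> perm_eq x (bs h) -> NI x -> exists x1, x = A :: x1.
Proof.
move=> h0 P N.
have Ain : A \in x by rewrite -has_pred1 has_count (count_bs P).
have [y [z [E Ny]]] := first_occ Ain.
case/lastP: y E Ny => [|pre u] E Ny; first by exists z.
have uin : u \in x by rewrite E mem_cat mem_rcons in_cons eqxx.
have uA : u != A by apply/eqP => E'; move: Ny; rewrite mem_rcons in_cons E' eqxx.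
have /andP [u0 uA'] := mem_bs P uin uA.
have Sy : sumn (rcons pre u) <= sumn F by apply: (sum_prefix (w := A :: z) (h := h)) => //; rewrite -E.
have cz : count_mem A z = h.*2.
  have := count_bs P; rewrite E count_cat (count_memPn Ny) /= eqxx; lia.
have Sz := sumn_count A z; rewrite cz in Sz.
have := N pre u A z; rewrite E cat_rcons => /(_ erefl).
move: Sy; rewrite -cats1 sumn_cat /= => Sy.
move=> H; exfalso; nia.
Qed.

Lemma base_case z : perm_eq (A :: z) (bs 0) -> NI (A :: z) -> z = F.
Proof.
move=> P N.
have Pz : perm_eq z F.
  by move: P; rewrite /bs /= cats1 perm_sym perm_rcons perm_cons perm_sym.
apply: (sorted_eq leq_trans anti_leq _ Hsort Pz).
apply: sorted_adj => p u v s E.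
have Ss : sumn s <= sumn z by rewrite E sumn_cat /=; lia.
rewrite (perm_sumn Pz) in Ss.
have := N (A :: p) u v s; rewrite E => /(_ erefl) /=.
move=> H; rewrite leqNgt; apply/negP => vu; move: H.
rewrite !mulnDr; nia.
Qed.

Lemma char h : forall x, perm_eq x (bs h) -> NI x -> x = xs h \/ x = rev (xs h).
Proof.
elim: h => [|h IH] x P N.
  have Ain : A \in x by rewrite -has_pred1 has_count (count_bs P).
  have [y [z [E Ny]]] := first_occ Ain.
  have Nz : A \notin z.
    apply/count_memPn; have := count_bs P; rewrite E count_cat (count_memPn Ny) /= eqxx.
    by rewrite add0n add1n => -[].
  case/lastP: y E Ny => [|pre v1] E Ny.
    left; rewrite E /xs /= cats0; congr (_ :: _); apply: base_case; [move: P|move: N]; by rewrite E.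
  case: z E Nz => [|v2 suf] E Nz.
    right; rewrite /xs /= cats0 rev_cons.
    have Prev : perm_eq (A :: rev (rcons pre v1)) (bs 0).
      by rewrite -(perm_rev (A :: _)) rev_cons revK -cats1 -E.
    have Nrev : NI (A :: rev (rcons pre v1)).
      have := NI_rev N; by rewrite E -cats1 rev_cat.
    have := base_case Prev Nrev => <-; by rewrite revK E cats1.
  exfalso.
  have v1in : v1 \in x by rewrite E mem_cat mem_rcons in_cons eqxx.
  have v1A : v1 != A by apply/eqP => E'; move: Ny; rewrite mem_rcons in_cons E' eqxx.
  have v2in : v2 \in x by rewrite E mem_cat !in_cons eqxx !orbT.
  have v2A : v2 != A by apply/eqP => E'; move: Nz; rewrite in_cons E' eqxx.
  have /andP [v10 v1A'] := mem_bs P v1in v1A.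
  have /andP [v20 v2A'] := mem_bs P v2in v2A.
  have H1 := N pre v1 A (v2 :: suf); rewrite E cat_rcons in H1; have {}H1 := H1 erefl.
  have H2 := N (rcons pre v1) A v2 suf; rewrite E in H2; have {}H2 := H2 erefl.
  move: H1 H2; rewrite -cats1 sumn_cat /= => H1 H2.
  have L1 : v2 + sumn suf <= sumn pre by nia.
  have L2 : sumn pre + (v1 + 0) <= sumn suf by nia.
  lia.
have [x1 E1] := head_A (ltn0Sn h) P N.
have Pr : perm_eq (rev x) (bs h.+1) by rewrite perm_rev.
have [w Ew] := head_A (ltn0Sn h) Pr (NI_rev N).

case/lastP: x1 E1 => [|x' l] E1.
  move: (count_bs P); rewrite E1 /= eqxx; lia.
have El : l = A by move: Ew; rewrite E1 rev_cons rev_rcons => -[].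
subst l.
have P' : perm_eq x' (bs h).
  rewrite -(perm_cons A) -(perm_cons A).
  have Q1 : perm_eq (A :: A :: x') x by rewrite E1 perm_cons perm_sym perm_rcons.
  apply: (perm_trans Q1); apply: (perm_trans P); rewrite /bs.
  have -> : (h.+1).*2.+1 = 2 + h.*2.+1 by rewrite doubleS; lia.
  by rewrite nseqD perm_catCA.
have N' : NI x' by apply: (NI_inner (A := A)); rewrite -E1.
have nS n : nseq n.+1 A = rcons (nseq n A) A.
  by rewrite -cats1 -[[:: A]]/(nseq 1 A) -nseqD addn1.
rewrite E1; case: (IH _ P' N') => ->; [left|right]; rewrite /xs.
  by rewrite /= !rcons_cat -nS.
by rewrite !rev_cat !rev_nseq !rcons_cat -nS.
Qed.
End Char.

Lemma notNI x : ~ NI x -> exists pre u v suf, x = pre ++ u :: v :: suf /\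
  v * sumn pre + u * sumn suf < u * sumn pre + v * sumn suf.
Proof.
move=> H; apply: NNPP => H'; apply: H => pre u v suf E.
rewrite leqNgt; apply/negP => L; apply: H'; by exists pre, u, v, suf.
Qed.

Lemma opt (A : nat) (F : seq nat) h :
  all (fun z => 0 < z < A) F -> sumn F < A -> sorted leq F ->
  forall x, perm_eq x (bs A F h) ->
  Gq x <= Gq (xs A F h) /\ (Gq x = Gq (xs A F h) -> x = xs A F h \/ x = rev (xs A F h)).
Proof.
move=> HF HS Hs.
set b := bs A F h.
set B := size b * (sumn b * sumn b).
have Bd y : perm_eq y b -> Gq y <= B.
  move=> P; rewrite /B -(perm_size P) -(perm_sumn P); exact: Gq_bound.
suff K : forall n x, perm_eq x b -> B - Gq x < n ->
  Gq x <= Gq (xs A F h) /\ (Gq x = Gq (xs A F h) -> x = xs A F h \/ x = rev (xs A F h)).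
  move=> x P; exact: (K (B - Gq x).+1).
elim=> [|n IH] x P Hn //.
case: (classic (NI x)) => [N|N].
  case: (char HF HS Hs P N) => ->; first by split => // _; left.
  rewrite Gq_rev; split => //; by right.
have [pre [u [v [suf [E L]]]]] := notNI N.
set x' := pre ++ v :: u :: suf.
have P' : perm_eq x' b.
  apply: perm_trans P; rewrite E /x' perm_cat2l -[v :: u :: suf]/([:: v; u] ++ suf).
  rewrite -[u :: v :: suf]/([:: u; v] ++ suf) perm_cat2r.
  by apply/permP => q /=; rewrite !addn0 addnC.
have Sw := Gq_swap pre u v suf; rewrite -/x' -E in Sw.
have lt : Gq x < Gq x' by lia.
have Bx' := Bd _ P'.
have [IH1 _] := IH x' P' ltac:(lia).
split; first lia.
move=> Eq; lia.
Qed.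

Lemma mono (s : nat) (a : nat -> nat) :
  (forall i, 1 <= i < s -> a i < a i.+1) ->
  forall i j, 1 <= i -> i < j -> j <= s -> a i < a j.
Proof.
move=> H i; elim=> [|j IH] // i1 ij js.
case: (ltngtP i j) => [lt|gt|eq].
- apply: ltn_trans (IH i1 lt (ltnW js)) (H j _); lia.
- lia.
- subst j; apply: H; lia.
Qed.

Lemma sumn_flat (f : nat -> seq nat) l :
  sumn (flatten [seq f i | i <- l]) = \sum_(i <- l) sumn (f i).
Proof. elim: l => [|i l IH] /=; first by rewrite big_nil. by rewrite big_cons sumn_cat IH. Qed.

Lemma pairwise_nseq n (v : nat) : pairwise leq (nseq n v).
Proof.
elim: n => [|n IH] //=; rewrite IH andbT; apply/allP => y /nseqP [-> _]; exact: leqnn.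
Qed.

Theorem theorem3p1 (k s h : nat) (a m : nat -> nat) :
  1 <= k -> 2 <= s ->
  1 <= a 1 ->
  (forall i, 1 <= i < s -> a i < a i.+1) ->
  (forall i, 1 <= i <= s -> 1 <= m i) ->
  \sum_(1 <= i < s.+1) m i = k ->
  m s = h.*2.+1 ->
  \sum_(1 <= i < s) m i * a i < a s ->
  perm_eq (xstar s h a m) (bmultiset s a m) /\
  (forall x : seq nat, perm_eq x (bmultiset s a m) ->
     qform x <= qform (xstar s h a m) /\
     (qform x = qform (xstar s h a m) ->
        x = xstar s h a m \/ x = rev (xstar s h a m))).
Proof.
move=> _ s2 a1 Ha _ _ ms Hsum.
set F := flatten [seq nseq (m i) (a i) | i <- iota 1 s.-1].
have Mo := mono Ha.
have Eb : bmultiset s a m = bs (a s) F h.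
  rewrite /bmultiset /bs -ms.
  have -> : iota 1 s = iota 1 s.-1 ++ [:: s].
    by rewrite -[in LHS](_ : s.-1 + 1 = s) ?iotaD /=; [congr (_ ++ [:: _])|]; lia.
  by rewrite map_cat flatten_cat /= cats0.
have Ex : xstar s h a m = xs (a s) F h by [].
have memF z : z \in F -> exists2 i, 1 <= i < s & z = a i.
  move/flatten_mapP => [i]; rewrite mem_iota => Hi /nseqP [-> _].
  exists i => //; lia.
have HF : all (fun z => 0 < z < a s) F.
  apply/allP => z /memF [i Hi ->]; apply/andP; split.
    case: (ltngtP 1 i) => [lt|gt|eq]; [|lia|by rewrite -eq].
    apply: leq_trans a1 (ltnW (Mo 1 i _ _ _)); lia.
  apply: Mo; lia.
have HS : sumn F < a s.
  rewrite /F sumn_flat.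
  have -> : \sum_(i <- iota 1 s.-1) sumn (nseq (m i) (a i)) = \sum_(1 <= i < s) m i * a i.
    rewrite /index_iota subn1; apply: eq_bigr => i _; by rewrite sumn_nseq mulnC.
  exact: Hsum.
have Hs : sorted leq F.
  rewrite sorted_pairwise; last exact: leq_trans.
  rewrite /F; have : s.-1 < s by lia.
  elim: s.-1 => [|n IH] // ns.
  rewrite -[n.+1]addn1 iotaD map_cat flatten_cat /= cats0 pairwise_cat pairwise_nseq andbT.
  rewrite IH ?andbT; last lia.
  apply/allrelP => y z /flatten_mapP [i]; rewrite mem_iota => Hi /nseqP [-> _].
  move/nseqP => [-> _]; apply: ltnW; apply: Mo; lia.
rewrite Eb Ex; split.
  rewrite /xs /bs perm_catCA perm_cat2l -nseqD.
  by have -> : h.+1 + h = h.*2.+1 by rewrite -addnn; lia.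
move=> x P; rewrite !qform_Gq; exact: opt HF HS Hs x P.
Qed.
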